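(* Let $F$ be any probability distribution on $[0,\infty)$ with finite mean $\mu=\mathbb{E}[S]>0$. Then for every price $p\in\mathbb{R}_+$, $\mathsf{W}(\mu,F)\ge \mathsf{W}(p,F)$; i.e., posting the mean $p^*=\mu$ is a welfare-maximizing fixed price.
   Context: Symmetric bilateral trade: $B,S$ i.i.d. with distribution $F$ (cumulative distribution function also denoted $F$). Posting price $p$, trade occurs iff $B>p\ge S$. Welfare: $\mathsf{W}(p,F)=\mathbb{E}[S]+\mathbb{E}[(B-S)\mathbf 1_{B>p\ge S}]$. *)

(* Defs.v *)
From HB Require Import structures.
From mathcomp Require Import all_boot all_order all_algebra.
From mathcomp Require Import all_classical all_reals all_analysis.
Set Implicit Arguments. Unset Strict Implicit. Unset Printing Implicit Defensive.
Import Order.TTheory GRing.Theory Num.Theory.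
Local Open Scope classical_set_scope.
Local Open Scope ring_scope.

(* B and S are i.i.d. with law F, so the joint law of (B,S) is the
   product measure P \x P on R * R, with z.1 = B and z.2 = S. *)
Definition welfare (R : realType) (P : probability R R) (p : R) : \bar R :=
  ((\int[P]_s (s%:E)) +
   \int[(P \x P)%E]_z ((if (p < z.1) && (z.2 <= p) then z.1 - z.2 else 0)%:E))%E.

(* Main.v *)
Require Import Defs.
From HB Require Import structures.
From mathcomp Require Import all_boot all_order all_algebra.
From mathcomp Require Import all_classical all_reals all_analysis.
From mathcomp Require Import measurable_realfun.
From mathcomp Require Import lra ring.
Import Order.TTheory GRing.Theory Num.Theory.
Local Open Scope classical_set_scope.
Local Open Scope ring_scope.

Section S.
Context (R : realType) (P : probability R R).
Hypothesis Pint : P.-integrable setT (fun x : R => x%:E).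

Definition Ind (p x : R) : R := if x <= p then 1 else 0.
Definition Jnd (p x : R) : R := if p < x then 1 else 0.

Lemma mInd p : measurable_fun setT (Ind p).
Proof.
apply: measurable_fun_ifT => //; apply: measurable_fun_ler => //.
Qed.

Lemma mJnd p : measurable_fun setT (Jnd p).
Proof.
apply: measurable_fun_ifT => //; apply: measurable_fun_ltr => //.
Qed.

Lemma intbound (g : R -> R) (a b : R) : measurable_fun setT g ->
  (forall x, `|g x| <= a * `|x| + b) -> P.-integrable setT (EFin \o g).
Proof.
move=> mg gb.
have ih : P.-integrable setT (EFin \o (fun x => a * `|x| + b)).
  have i1 : P.-integrable setT (EFin \o (Num.norm \o id)).
    by apply: integrable_norm; exact: Pint.
  have i2 := integrableZl measurableT a i1.
  have i3 := finite_measure_integrable_cst P b (measurableT : measurable [set: R]).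
  have i4 := integrableD measurableT i2 i3.
  apply: eq_integrable i4 => // x _ /=.

apply: le_integrable ih => //.
  exact/measurable_EFinP.
move=> x _ /=; rewrite lee_fin.
apply: le_trans (gb x) _; exact: ler_norm.
Qed.


Definition RI (f : R -> R) : R := Rintegral P setT f.

Lemma RI_E f : P.-integrable setT (EFin \o f) ->
  (\int[P]_x (f x)%:E)%E = (RI f)%:E.
Proof. by move=> h; rewrite /RI /Rintegral fineK //; exact: integrable_fin_num. Qed.

Lemma Ind01 p x : `|Ind p x| <= 1.
Proof. by rewrite /Ind; case: ifP; rewrite ?normr1 ?normr0. Qed.
Lemma Jnd01 p x : `|Jnd p x| <= 1.
Proof. by rewrite /Jnd; case: ifP; rewrite ?normr1 ?normr0. Qed.

Ltac mfun := rewrite ?/Ind ?/Jnd; repeat first [ apply: measurable_funM | apply: measurable_funB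
  | apply: measurable_funD | apply: measurable_fun_ifT | apply: measurable_fun_ler
  | apply: measurable_fun_ltr | exact: measurable_cst | exact: measurable_id ].

Lemma iInd p : P.-integrable setT (EFin \o Ind p).
Proof.
apply: (intbound _ 0 1); first exact: mInd.
by move=> x; rewrite mul0r add0r Ind01.
Qed.
Lemma iJnd p : P.-integrable setT (EFin \o Jnd p).
Proof.
apply: (intbound _ 0 1); first exact: mJnd.
by move=> x; rewrite mul0r add0r Jnd01.
Qed.
Lemma ixInd p : P.-integrable setT (EFin \o (fun x => x * Ind p x)).
Proof.
apply: (intbound _ 1 0); first by mfun.
move=> x; rewrite mul1r addr0 normrM.
by rewrite -[leRHS]mulr1 ler_wpM2l // Ind01.
Qed.
Lemma ixJnd p : P.-integrable setT (EFin \o (fun x => x * Jnd p x)).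
Proof.
apply: (intbound _ 1 0); first by mfun.
move=> x; rewrite mul1r addr0 normrM.
by rewrite -[leRHS]mulr1 ler_wpM2l // Jnd01.
Qed.

Definition cc p := RI (fun x => x * Jnd p x).
Definition qq p := RI (Jnd p).

Lemma inner p s :
  (\int[P]_b ((if (p < b) && (s <= p) then b - s else 0)%:E))%E =
  (Ind p s * (cc p - s * qq p))%:E.
Proof.
rewrite (eq_integral (fun b : R => (Ind p s * (b * Jnd p b - s * Jnd p b))%:E)); last first.
  move=> b _; rewrite /Ind /Jnd; case: (p < b); case: (s <= p) => /=;
  by rewrite ?mulr1 ?mulr0 ?mul1r ?mul0r ?subr0.
rewrite RI_E; last first.
  apply: (intbound _ 1 `|s|); first by mfun.
  move=> b; rewrite mul1r normrM -mulrBl normrM.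
  apply: (le_trans (y := `|b - s|)).
    have := Ind01 p s; have := Jnd01 p b.
    have := normr_ge0 (Ind p s); have := normr_ge0 (Jnd p b); have := normr_ge0 (b - s).
    move=> h1 h2 h3 h4 h5; rewrite mulrCA -[leRHS]mulr1 ler_wpM2l //; nra.
  exact: ler_normB.
congr EFin; rewrite /RI /cc /qq /RI.
rewrite RintegralZl //; last first.
  apply: (intbound _ 1 `|s|); first by mfun.
  move=> b; rewrite mul1r -mulrBl normrM.
  apply: (le_trans (y := `|b - s|)); last exact: ler_normB.
  by rewrite -[leRHS]mulr1 ler_wpM2l // Jnd01.
rewrite RintegralB //; [|exact: ixJnd|].
  by rewrite RintegralZl //; exact: iJnd.
apply: (intbound _ 0 `|s|); first by mfun.
move=> b; rewrite mul0r add0r normrM.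
by rewrite -[leRHS]mulr1 ler_wpM2l // Jnd01.
Qed.

Lemma Gform p :
  (\int[(P \x P)%E]_z ((if (p < z.1) && (z.2 <= p) then z.1 - z.2 else 0)%:E))%E =
  (RI (fun s => Ind p s * (cc p - s * qq p)))%:E.
Proof.
rewrite fubini_tonelli2 //; last 2 first.
- apply/measurable_EFinP; apply: measurable_fun_ifT.
  + apply: measurable_and; [apply: measurable_fun_ltr|apply: measurable_fun_ler] => //.
  + apply: measurable_funB; [exact: measurable_fst|exact: measurable_snd].
  + exact: measurable_cst.
- move=> z; rewrite lee_fin; case: ifP => // /andP[h1 h2].
  by rewrite subr_ge0; apply: le_trans h2 (ltW h1).
rewrite /fubini_G.
rewrite (eq_integral (fun s : R => (Ind p s * (cc p - s * qq p))%:E)); last first.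
  by move=> s _; exact: inner.
rewrite RI_E //.
apply: (intbound _ `|qq p| `|cc p|); first by mfun.
move=> x; rewrite normrM.
have h := Ind01 p x; have h0 := normr_ge0 (Ind p x).
have h3 : `|cc p - x * qq p| <= `|qq p| * `|x| + `|cc p|.
  apply: le_trans (ler_normB _ _) _; rewrite normrM addrC mulrC //.
have := normr_ge0 (cc p - x * qq p); nra.
Qed.

Lemma IJ p x : Ind p x + Jnd p x = 1.
Proof.
rewrite /Ind /Jnd; case: leP => _ /=; rewrite ?addr0 ?add0r //.
Qed.

Lemma split1 p : RI (Ind p) + qq p = 1.
Proof.
rewrite /qq /RI -RintegralD //; [|exact: iInd|exact: iJnd].
rewrite (eq_Rintegral _ (g := fun _ => 1)); last by move=> x _; rewrite IJ.
rewrite Rintegral_cst // mul1r; rewrite -[X in _ = X]/(fine 1%E); congr fine; exact: probability_setT.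
Qed.

Lemma splitx p : RI (fun x => x * Ind p x) + cc p = RI id.
Proof.
rewrite /cc /RI -RintegralD //; [|exact: ixInd|exact: ixJnd].
by apply: eq_Rintegral => x _; rewrite -mulrDr IJ mulr1.
Qed.

Lemma Gval p : RI (fun s => Ind p s * (cc p - s * qq p)) =
  RI id * RI (Ind p) - RI (fun x => x * Ind p x).
Proof.
have -> : RI (fun s => Ind p s * (cc p - s * qq p)) =
   RI (fun s => cc p * Ind p s - qq p * (s * Ind p s)).
  by apply: eq_Rintegral => x _; ring.
rewrite /RI RintegralB //; last 2 first.
- exact: integrableZl (iInd p).
- exact: integrableZl (ixInd p).
rewrite RintegralZl //; last exact: iInd.
rewrite RintegralZl //; last exact: ixInd.
have := split1 p; have := splitx p; rewrite /RI /cc /qq /RI.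
move=> h1 h2; rewrite -h1.
have -> : Rintegral P [set: R] (Jnd p) = 1 - Rintegral P [set: R] (Ind p) by rewrite -h2; ring.
ring.
Qed.

Lemma Gval2 p : RI id * RI (Ind p) - RI (fun x => x * Ind p x) =
  RI (fun x => (RI id - x) * Ind p x).
Proof.
have -> : RI (fun x => (RI id - x) * Ind p x) =
   RI (fun x => RI id * Ind p x - x * Ind p x).
  by apply: eq_Rintegral => x _; ring.
rewrite /RI RintegralB //; last 2 first.
- exact: integrableZl (iInd p).
- exact: ixInd.
by rewrite RintegralZl //; exact: iInd.
Qed.

Lemma iG p m : P.-integrable setT (EFin \o (fun x => (m - x) * Ind p x)).
Proof.
apply: (intbound _ 1 `|m|); first by mfun.
move=> x; rewrite normrM.
have h := Ind01 p x; have h0 := normr_ge0 (Ind p x).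
have h3 : `|m - x| <= 1 * `|x| + `|m|.
  by have := ler_normB m x; rewrite mul1r; lra.
have := normr_ge0 (m - x); nra.
Qed.
End S.

Theorem proposition4 (R : realType) (P : probability R R) (mu : R) :
  P [set x : R | x < 0] = 0%E ->
  P.-integrable setT (fun x : R => x%:E) ->
  (\int[P]_x (x%:E) = mu%:E)%E ->
  0 < mu ->
  forall p : R, 0 <= p -> (welfare P p <= welfare P mu)%E.
Proof.
move=> _ Pint Hmu _ p _.
have RIid : RI _ P id = mu by rewrite /RI /Rintegral Hmu.
rewrite /welfare !Gform // !Gval // !Gval2 // RIid Hmu -!EFinD lee_fin lerD2l.
apply: le_Rintegral => //; [exact: iG|exact: iG|].
move=> x _; rewrite /Ind.
case: (leP x p) => hp; case: (leP x mu) => hm; rewrite ?mulr1 ?mulr0.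
all: lra.
Qed.
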